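(* Let $n\ge1$ and let $\mathbf{u}_0,\dots,\mathbf{u}_n$ be linearly independent unit vectors in $\mathbf{C}^{n+1}$. For a nonzero $\mathbf{c}$ let $H_{\mathbf{c}}=\{[\mathbf{x}]\in\mathbf{CP}^n:\mathbf{c}\cdot\mathbf{x}=0\}$; the hyperplanes $H_{\mathbf{u}_0},\dots,H_{\mathbf{u}_n}$ are the faces of a projective simplex. For each $j$ let $P_j$ be the unique point of $\bigcap_{i\ne j}H_{\mathbf{u}_i}$ (the vertex opposite $H_{\mathbf{u}_j}$), let $d_j$ be the Fubini–Study distance from $P_j$ to $H_{\mathbf{u}_j}$, and let $d_{\min}=\min_j d_j$. Then $$d_{\min}^n\le|\det(\mathbf{u}_0,\dots,\mathbf{u}_n)|\le d_{\min}.$$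
   Context: The dot product on $\mathbf{C}^{n+1}$ is the bilinear form $\mathbf{a}\cdot\mathbf{b}=\sum_i a_ib_i$ (standard basis $\mathbf{e}_0,\dots,\mathbf{e}_n$), and $|\mathbf{a}|^2=\mathbf{a}\cdot\overline{\mathbf{a}}$. On $\Lambda^k\mathbf{C}^{n+1}$ the basis $\mathbf{e}_{i_1}\wedge\dots\wedge\mathbf{e}_{i_k}$ is declared orthonormal, giving a norm $|\omega|^2=\omega\cdot\overline\omega$. $\mathbf{CP}^n$ is the set of classes $[\mathbf{v}]$ of nonzero vectors modulo nonzero scalars. The Fubini–Study distance between points represented by unit vectors $\mathbf{v},\mathbf{w}$ is $|\mathbf{v}\wedge\mathbf{w}|$; the distance from a point $[\mathbf{u}]$ ($|\mathbf{u}|=1$) to a hyperplane $H_{\mathbf{c}}$ is $\min\{|\mathbf{u}\wedge\mathbf{x}|:\mathbf{c}\cdot\mathbf{x}=0,\ |\mathbf{x}|=1\}$. $\det(\mathbf{u}_0,\dots,\mathbf{u}_n)$ is the determinant of the matrix with these rows. *)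

(* Defs.v *)
From HB Require Import structures.
From mathcomp Require Import all_boot all_order all_algebra.
Set Implicit Arguments. Unset Strict Implicit. Unset Printing Implicit Defensive.
Import Order.TTheory GRing.Theory Num.Theory.
Local Open Scope ring_scope.

Section Defs.
Variable C : numClosedFieldType.

Definition dotv k (a b : 'rV[C]_k) : C := \sum_(i < k) a 0 i * b 0 i.

Definition conjv k (a : 'rV[C]_k) : 'rV[C]_k := map_mx (fun z : C => z^*) a.

Definition vnorm k (a : 'rV[C]_k) : C := sqrtC (dotv a (conjv a)).

(* |v /\ w| with e_i /\ e_j (i<j) orthonormal: coordinates v_i w_j - v_j w_i *)
Definition wedge_coef k (v w : 'rV[C]_k) (i j : 'I_k) : C :=
  v 0 i * w 0 j - v 0 j * w 0 i.
Definition wedge_norm k (v w : 'rV[C]_k) : C :=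
  sqrtC (\sum_(i < k) \sum_(j < k | (i < j)%N)
           wedge_coef v w i j * (wedge_coef v w i j)^*).

(* d is the Fubini-Study distance from [u] (|u|=1) to H_c:
   d = min { |u /\ x| : c.x = 0, |x| = 1 } (minimum attained) *)
Definition is_dist_pt_hyp k (u c : 'rV[C]_k) (d : C) : Prop :=
  (exists x, [/\ dotv c x = 0, vnorm x = 1 & wedge_norm u x = d]) /\
  (forall x, dotv c x = 0 -> vnorm x = 1 -> d <= wedge_norm u x).

End Defs.

(* Main.v *)
Require Import Defs.
From HB Require Import structures.
From mathcomp Require Import all_boot all_order all_algebra sesquilinear spectral ring fingroup perm.
Import Order.TTheory GRing.Theory Num.Theory.
Local Open Scope ring_scope.
Set Implicit Arguments. Unset Strict Implicit. Unset Printing Implicit Defensive.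

Section Aux.
Variable C : numClosedFieldType.
Local Open Scope sesquilinear_scope.
Local Notation "''[' u , v ]" := (@dotmx C _ u v) : ring_scope.

Lemma dotmx_sum k (u v : 'rV[C]_k) : '[u, v] = \sum_(i < k) u 0 i * (v 0 i)^*.
Proof. by rewrite dotmxE mxE; apply: eq_bigr => i _; rewrite !mxE. Qed.

Lemma comp_le_norm k (v : 'rV[C]_k) (i : 'I_k) : `|v 0 i| ^+ 2 <= '[v, v].
Proof.
rewrite dotmx_sum (bigD1 i) //= normCK lerDl sumr_ge0 // => j _.
by rewrite mul_conjC_ge0.
Qed.

Lemma QR k (A : 'M[C]_k) : exists L B, [/\ B \is unitarymx, A = L *m B,
  (forall i j : 'I_k, (i < j)%N -> L i j = 0) &
  forall i, '[row i L, row i L] = '[row i A, row i A]].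
Proof.
have Bu : schmidt A \is unitarymx by apply: schmidt_unitarymx.
exists (A *m (schmidt A)^t*), (schmidt A); split => //.
- by rewrite mulmxKtV.
- move=> i j ltij.
  have : (row i A <= kermx ((row j (schmidt A))^t*))%MS.
    apply: submx_trans (row_schmidt_sub A i) _.
    apply/sumsmx_subP => l lli; rewrite genmxE; apply/sub_kermxP.
    rewrite (mx11_scalar (_ *m _)) -dotmxE (row_unitarymxP _) //.
    have -> : (l == j) = false.
      by apply/negbTE/eqP => e; move: lli; rewrite e leqNgt ltij.
    by apply/matrixP => a b; rewrite !mxE mul0rn.
  move/sub_kermxP => /matrixP /(_ 0 0); rewrite !mxE => H.
  by rewrite -[RHS]H; apply: eq_bigr => l _; rewrite !mxE.
- move=> i; rewrite !dotmxE row_mul trmx_mul map_mxM trmxCK mulmxA.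
  by rewrite mulmxKtV.
Qed.

Lemma normdet_unitary k (B : 'M[C]_k) : B \is unitarymx -> `|\det B| = 1.
Proof.
move=> /unitarymxP /(congr1 determinant); rewrite det_mulmx det1.
rewrite det_map_mx det_tr => h.
apply/eqP; rewrite -(@sqrp_eq1 _ `|\det B|) // normCK h //.
Qed.

Lemma det_QR k (A L B : 'M[C]_k) : B \is unitarymx -> A = L *m B ->
  (forall i j : 'I_k, (i < j)%N -> L i j = 0) ->
  `|\det A| = \prod_i `|L i i|.
Proof.
move=> Bu -> Lt; rewrite det_mulmx normrM (normdet_unitary Bu) mulr1.
rewrite det_trig; [exact: normr_prod | exact/is_trig_mxP].
Qed.

Lemma dot_QR k (A L B : 'M[C]_k) (x : 'rV[C]_k) j : B \is unitarymx -> A = L *m B ->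
  '[row j A, x] = \sum_l L j l * ((x *m B^t*) 0 l)^*.
Proof.
move=> Bu ->; transitivity '[row j L, x *m B^t*]; last first.
  by rewrite dotmx_sum; apply: eq_bigr => l _; rewrite mxE.
by rewrite !dotmxE row_mul trmx_mul map_mxM trmxCK mulmxA.
Qed.

Lemma norm_QR k (B : 'M[C]_k) (x : 'rV[C]_k) : B \is unitarymx ->
  '[x *m B^t*, x *m B^t*] = '[x, x].
Proof.
by move=> Bu; rewrite !dotmxE trmx_mul map_mxM trmxCK mulmxA mulmxKtV.
Qed.

Lemma vanish_QR k (A L B : 'M[C]_k) (x : 'rV[C]_k) (i : 'I_k) :
  B \is unitarymx -> A = L *m B ->
  (forall i j : 'I_k, (i < j)%N -> L i j = 0) ->
  (forall j, L j j != 0) ->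
  (forall j : 'I_k, (j < i)%N -> '[row j A, x] = 0) ->
  forall l : 'I_k, (l < i)%N -> (x *m B^t*) 0 l = 0.
Proof.
move=> Bu AE Lt Ln0 hx.
suff H : forall m (l : 'I_k), (l < m)%N -> (l < i)%N -> (x *m B^t*) 0 l = 0.
  by move=> l; apply: (H l.+1).
elim=> [//|m IH] l lm li.
case: (ltngtP l m) => [lm'|lm'|lE]; first exact: IH.
  by move: lm; rewrite ltnS leqNgt lm'.
have := hx l li; rewrite (dot_QR _ _ Bu AE) (bigD1 l) //= big1.
  by rewrite addr0 => /eqP; rewrite mulf_eq0 (negbTE (Ln0 l)) conjC_eq0 => /eqP.
move=> t tl; case: (ltngtP t l) => [tl'|lt|e].
- by rewrite IH ?conjC0 ?mulr0 // -?lE // (ltn_trans tl' li).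
- by rewrite Lt ?mul0r.
- by move: tl; rewrite -val_eqE /= e eqxx.
Qed.


Lemma sum_prod k (g h : 'I_k -> C) :
  \sum_i \sum_j g i * h j = (\sum_i g i) * (\sum_j h j).
Proof. by rewrite mulr_suml; apply: eq_bigr => i _; rewrite mulr_sumr. Qed.

Lemma sum_tri k (f : 'I_k -> 'I_k -> C) : (forall i j, f i j = f j i) ->
  (forall i, f i i = 0) ->
  \sum_i \sum_j f i j = 2 * \sum_(i < k) \sum_(j < k | (i < j)%N) f i j.
Proof.
move=> fs f0.
have -> : \sum_i \sum_j f i j = \sum_(i < k) \sum_(j < k) (if (i < j)%N then f i j else 0)
    + \sum_(i < k) \sum_(j < k) (if (j < i)%N then f i j else 0).
  rewrite -big_split; apply: eq_bigr => i _; rewrite -big_split.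
  apply: eq_bigr => j _ /=; case: (ltngtP i j) => [_|_|e]; rewrite ?addr0 ?add0r //.
  by rewrite (ord_inj e) f0.
rewrite mulr_natl mulr2n; congr (_ + _).
  by apply: eq_big => // i _; rewrite [RHS]big_mkcond.
rewrite [LHS]exchange_big /=; apply: eq_big => // i _; rewrite [RHS]big_mkcond /=.
by apply: eq_big => // j _; rewrite fs.
Qed.

Lemma lagrange k (P x : 'rV[C]_k) :
  \sum_(i < k) \sum_(j < k | (i < j)%N) wedge_coef P x i j * (wedge_coef P x i j)^*
  = '[P, P] * '[x, x] - '[P, x] * '[x, P].
Proof.
apply: (@mulfI _ 2); first by rewrite pnatr_eq0.
rewrite -sum_tri; last first.
- by move=> i; rewrite /wedge_coef subrr mul0r.
- by move=> i j; rewrite /wedge_coef -[in LHS]opprB rmorphN mulrNN.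
have -> : \sum_i \sum_j wedge_coef P x i j * (wedge_coef P x i j)^* =
  \sum_(i < k) \sum_(j < k) ((P 0 i * (P 0 i)^*) * (x 0 j * (x 0 j)^*) + (x 0 i * (x 0 i)^*) * (P 0 j * (P 0 j)^*))
  - \sum_(i < k) \sum_(j < k) ((P 0 i * (x 0 i)^*) * (x 0 j * (P 0 j)^*) + (x 0 i * (P 0 i)^*) * (P 0 j * (x 0 j)^*)).
  rewrite -sumrB; apply: eq_bigr => i _; rewrite -sumrB; apply: eq_bigr => j _.
  rewrite /wedge_coef rmorphB !rmorphM /=; ring.
under eq_bigr do rewrite big_split. under [X in _ - X]eq_bigr do rewrite big_split.
rewrite !big_split /= !sum_prod !dotmx_sum; ring.
Qed.

Lemma dotmxC k (u v : 'rV[C]_k) : '[v, u] = ('[u, v])^*.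
Proof.
rewrite !dotmx_sum rmorph_sum; apply: eq_bigr => i _.
by rewrite rmorphM /= conjCK mulrC.
Qed.

Lemma dotmxZl k a (u v : 'rV[C]_k) : '[a *: u, v] = a * '[u, v].
Proof.
by rewrite !dotmx_sum mulr_sumr; apply: eq_bigr => i _; rewrite mxE mulrA.
Qed.

Lemma dotmxZr k a (u v : 'rV[C]_k) : '[u, a *: v] = a^* * '[u, v].
Proof.
rewrite !dotmx_sum mulr_sumr; apply: eq_bigr => i _; rewrite mxE rmorphM /=.
by rewrite mulrCA.
Qed.

Lemma dotmxBl k (u w v : 'rV[C]_k) : '[u - w, v] = '[u, v] - '[w, v].
Proof.
by rewrite !dotmx_sum -sumrB; apply: eq_bigr => i _; rewrite !mxE mulrBl.
Qed.

Lemma dotmxBr k (u w v : 'rV[C]_k) : '[v, u - w] = '[v, u] - '[v, w].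
Proof.
rewrite !dotmx_sum -sumrB; apply: eq_bigr => i _; rewrite !mxE rmorphB /=.
by rewrite mulrBr.
Qed.

Definition conjv' k (a : 'rV[C]_k) := map_mx (fun z : C => z^* ) a.

Lemma dotvE k (a b : 'rV[C]_k) : dotv a b = '[a, conjv b].
Proof.
rewrite dotmx_sum /dotv; apply: eq_bigr => i _; rewrite /conjv !mxE conjCK //.
Qed.

Lemma dot_conjv k (a b : 'rV[C]_k) : '[conjv a, conjv b] = '[b, a].
Proof.
rewrite !dotmx_sum; apply: eq_bigr => i _; rewrite /conjv !mxE conjCK mulrC //.
Qed.

Lemma dotv_sym k (a b : 'rV[C]_k) : dotv a b = dotv b a.
Proof. by apply: eq_bigr => i _; rewrite mulrC. Qed.

Lemma vnormE k (a : 'rV[C]_k) : vnorm a = sqrtC '[a, a].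
Proof.
rewrite /vnorm dotvE; congr (sqrtC '[_, _]).
by apply/matrixP => i j; rewrite /conjv !mxE conjCK.
Qed.

Lemma vnorm1 k (a : 'rV[C]_k) : vnorm a = 1 -> '[a, a] = 1.
Proof. by rewrite vnormE => h; rewrite -[dotmx a a]sqrtCK h expr1n. Qed.

Lemma wedgeE k (P x : 'rV[C]_k) :
  wedge_norm P x = sqrtC ('[P, P] * '[x, x] - '[P, x] * '[x, P]).
Proof. by rewrite /wedge_norm lagrange. Qed.

Lemma wedge_ge0 k (P x : 'rV[C]_k) : 0 <= wedge_norm P x.
Proof.
rewrite /wedge_norm sqrtC_ge0 sumr_ge0 // => i _; rewrite sumr_ge0 // => j _.
exact: mul_conjC_ge0.
Qed.

Lemma CS k (y x : 'rV[C]_k) : '[y, x] * '[x, y] <= '[y, y] * '[x, x].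
Proof.
have [H _] := CauchySchwarz (@dotmx C k) y x.
by rewrite (dotmxC y x) -normCK.
Qed.

Lemma dist_lb k (P u x : 'rV[C]_k) : '[P, P] = 1 -> '[u, u] = 1 -> '[x, x] = 1 ->
  dotv u x = 0 -> `|dotv u P| <= wedge_norm P x.
Proof.
move=> hP hu hx hux.
set v := conjv u.
have hv : '[v, v] = 1 by rewrite dot_conjv.
have -> : dotv u P = '[P, v] by rewrite dotv_sym dotvE.
move: hux; rewrite dotv_sym dotvE -/v => hxv.
set c := '[P, v]; set a := '[P, x].
have hvx : '[v, x] = 0 by rewrite dotmxC hxv conjC0.
have hvP : '[v, P] = c^* by rewrite dotmxC.
have hxP : '[x, P] = a^* by rewrite dotmxC.
set y := P - c *: v.
have hyx : '[y, x] = a by rewrite dotmxBl dotmxZl hvx mulr0 subr0.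
have hyy : '[y, y] = 1 - c * c^*.
  rewrite /y !dotmxBl !dotmxBr !dotmxZl !dotmxZr hP hv hvP -/c; ring.
have := CS y x; rewrite hyx (dotmxC y x) hyx hyy hx mulr1 => Hcs.
rewrite wedgeE hP hx hxP mulr1 normC_def ler_sqrtC //.
- by rewrite lerBrDr addrC -lerBrDr.
- by rewrite nnegrE mul_conjC_ge0.
- by rewrite nnegrE subr_ge0 (le_trans Hcs) // lerBlDr lerDl mul_conjC_ge0.
Qed.

Lemma dist_ub k (P u : 'rV[C]_k) d : '[P, P] = 1 -> '[u, u] = 1 ->
  is_dist_pt_hyp P u d -> d <= `|dotv u P|.
Proof.
move=> hP hu [[x0 [hux0 hx0 <-]] hall].
set v := conjv u.
have hv : '[v, v] = 1 by rewrite dot_conjv.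
have -> : dotv u P = '[P, v] by rewrite dotv_sym dotvE.
set c := '[P, v].
have hvP : '[v, P] = c^* by rewrite dotmxC.
set y := P - c *: v.
have hyy : '[y, y] = 1 - c * c^*.
  rewrite /y !dotmxBl !dotmxBr !dotmxZl !dotmxZr hP hv hvP -/c; ring.
have [y0|yn0] := eqVneq y 0.
  have cc1 : c * c^* = 1.
    have : '[y, y] == 0 by rewrite y0 dotmxE mul0mx mxE.
    by rewrite hyy subr_eq0 => /eqP <-.
  rewrite normC_def cc1 sqrtC1 wedgeE hP (vnorm1 hx0) mul1r.
  have := CS P x0; rewrite hP (vnorm1 hx0) mul1r (dotmxC P x0) => Hcs.
  rewrite -[X in _ <= X]sqrtC1 ler_sqrtC ?nnegrE //.
    by rewrite lerBlDr lerDl mul_conjC_ge0.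
  by rewrite subr_ge0.
have ypos : 0 < '[y, y] by rewrite dnorm_gt0.
set s := sqrtC '[y, y].
have spos : 0 < s by rewrite sqrtC_gt0.
have sc : s^* = s by rewrite conj_Creal // gtr0_real.
have sic : (s^-1)^* = s^-1 by rewrite fmorphV /= sc.
have s2 : s * s = '[y, y] by rewrite -expr2 sqrtCK.
have sn0 : s != 0 by rewrite gt_eqF.
set x := s^-1 *: y.
have hxv : '[x, v] = 0.
  by rewrite /x dotmxZl /y dotmxBl dotmxZl hv mulr1 -/c subrr mulr0.
have hx1 : '[x, x] = 1.
  by rewrite /x dotmxZl dotmxZr sic -s2; field.
have hPx : '[P, x] = s.
  rewrite /x dotmxZr sic /y dotmxBr dotmxZr hP -/c.
  have -> : 1 - c^* * c = s * s by rewrite s2 hyy mulrC.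
  by field.
have H1 : dotv u x = 0 by rewrite dotv_sym dotvE -/v.
have H2 : vnorm x = 1 by rewrite vnormE hx1 sqrtC1.
apply: (le_trans (hall x H1 H2)).
rewrite wedgeE hP hx1 (dotmxC P x) hPx sc mulr1 s2 hyy.
by rewrite opprB addrC subrK normC_def.
Qed.
Lemma diag_QR k (A L B : 'M[C]_k) (x : 'rV[C]_k) (i : 'I_k) :
  B \is unitarymx -> A = L *m B ->
  (forall i j : 'I_k, (i < j)%N -> L i j = 0) ->
  (forall j, L j j != 0) ->
  (forall j : 'I_k, (j < i)%N -> '[row j A, x] = 0) ->
  '[row i A, x] = L i i * ((x *m B^t*) 0 i)^*.
Proof.
move=> Bu AE Lt Ln0 hx; rewrite (dot_QR _ _ Bu AE) (bigD1 i) //= big1 ?addr0 //.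
move=> l li; case: (ltngtP l i) => [lt|gt|e].
- by rewrite (vanish_QR Bu AE Lt Ln0 hx lt) conjC0 mulr0.
- by rewrite Lt ?mul0r.
- by move: li; rewrite -val_eqE /= e eqxx.
Qed.

Lemma sq_le1 (a : C) : 0 <= a -> a ^+ 2 <= 1 -> a <= 1.
Proof. by move=> a0; rewrite expr_le1. Qed.

Lemma lb_QR k (A L B : 'M[C]_k) (x : 'rV[C]_k) (i : 'I_k) :
  B \is unitarymx -> A = L *m B ->
  (forall i j : 'I_k, (i < j)%N -> L i j = 0) ->
  (forall j, L j j != 0) -> '[x, x] = 1 ->
  (forall j : 'I_k, (j < i)%N -> '[row j A, x] = 0) ->
  `|'[row i A, x]| <= `|L i i|.
Proof.
move=> Bu AE Lt Ln0 hx1 hx; rewrite (diag_QR Bu AE Lt Ln0 hx) normrM.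
rewrite ler_piMr // norm_conjC sq_le1 //.
by rewrite -hx1 -(norm_QR x Bu) comp_le_norm.
Qed.

Lemma Lle1 k (A L : 'M[C]_k) (i : 'I_k) :
  (forall i, '[row i L, row i L] = '[row i A, row i A]) ->
  '[row i A, row i A] = 1 -> `|L i i| <= 1.
Proof.
move=> hL h1; apply: sq_le1 => //.
by have := comp_le_norm (row i L) i; rewrite hL h1 mxE.
Qed.
Lemma ub_QR k (A L B : 'M[C]_k.+1) (x : 'rV[C]_k.+1) :
  B \is unitarymx -> A = L *m B ->
  (forall i j : 'I_k.+1, (i < j)%N -> L i j = 0) ->
  (forall j, L j j != 0) -> '[x, x] = 1 ->
  (forall j, j != ord_max -> '[row j A, x] = 0) ->
  `|'[row ord_max A, x]| = `|L ord_max ord_max|.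
Proof.
move=> Bu AE Lt Ln0 hx1 hx.
have hx' : forall j : 'I_(k.+1), (j < @ord_max k)%N -> '[row j A, x] = 0.
  by move=> j jl; apply: hx; rewrite -val_eqE /= neq_ltn jl.
rewrite (diag_QR Bu AE Lt Ln0 hx') normrM norm_conjC.
suff -> : `|(x *m B^t*) 0 ord_max| = 1 by rewrite mulr1.
apply/eqP; rewrite -(@sqrp_eq1 _ `|(x *m B^t*) 0 ord_max|) // normCK.
rewrite -hx1 -(norm_QR x Bu) dotmx_sum (bigD1 ord_max) //= big1 ?addr0 //.
move=> l ln; rewrite (vanish_QR Bu AE Lt Ln0 hx') ?mul0r //.
by rewrite ltn_neqAle -ltnS ltn_ord andbT; move: ln; rewrite -val_eqE.
Qed.

Lemma Ln0_QR k (A L B : 'M[C]_k) : B \is unitarymx -> A = L *m B ->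
  (forall i j : 'I_k, (i < j)%N -> L i j = 0) -> \det A != 0 ->
  forall j, L j j != 0.
Proof.
move=> Bu AE Lt dA j; apply/eqP => Lj.
move: dA; rewrite -normr_eq0 (det_QR Bu AE Lt) (bigD1 j) //= Lj normr0 mul0r.
by rewrite eqxx.
Qed.

Lemma det_ub k (A : 'M[C]_k.+1) (x : 'rV[C]_k.+1) :
  (forall i, '[row i A, row i A] = 1) -> \det A != 0 -> '[x, x] = 1 ->
  (forall j, j != ord_max -> '[row j A, x] = 0) ->
  `|\det A| <= `|'[row ord_max A, x]|.
Proof.
move=> hA dA hx1 hx.
have [L [B [Bu AE Lt hL]]] := QR A.
have Ln0 := Ln0_QR Bu AE Lt dA.
rewrite (ub_QR Bu AE Lt Ln0 hx1 hx) (det_QR Bu AE Lt) (bigD1 ord_max) //=.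
rewrite ler_piMr // prodr_ile1 // => i _.
by rewrite normr_ge0 (Lle1 hL (hA i)).
Qed.

Lemma det_lb k (A : 'M[C]_k.+1) (X : 'I_k.+1 -> 'rV[C]_k.+1) :
  (forall i, '[row i A, row i A] = 1) -> \det A != 0 ->
  (forall i, '[X i, X i] = 1) ->
  (forall i j, j != i -> '[row j A, X i] = 0) ->
  \prod_(i < k) `|'[row (lift ord0 i) A, X (lift ord0 i)]| <= `|\det A|.
Proof.
move=> hA dA hX1 hX.
have [L [B [Bu AE Lt hL]]] := QR A.
have Ln0 := Ln0_QR Bu AE Lt dA.
have L00 : `|L ord0 ord0| = 1.
  apply/eqP; rewrite -(@sqrp_eq1 _ `|L ord0 ord0|) // normCK.
  have := hL ord0; rewrite hA dotmx_sum (bigD1 ord0) //= big1 ?addr0 ?mxE //.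
    by move=> ->.
  move=> l l0; rewrite !mxE Lt ?mul0r // lt0n; move: l0.
  by rewrite -val_eqE.
rewrite (det_QR Bu AE Lt) big_ord_recl L00 mul1r ler_prod // => i _.
rewrite normr_ge0 /=; apply: (lb_QR Bu AE Lt Ln0 (hX1 _)) => j ji.
by apply: hX; rewrite -val_eqE /= neq_ltn ji.
Qed.
End Aux.

Lemma row_xrow (R : Type) m n (a b i : 'I_m) (A : 'M[R]_(m, n)) :
  row i (xrow a b A) = row (perm.tperm a b i) A.
Proof. by apply/rowP => l; rewrite !mxE. Qed.

Lemma normdet_xrow (R : numDomainType) m (a b : 'I_m) (A : 'M[R]_m) :
  `|\det (xrow a b A)| = `|\det A|.
Proof. by rewrite xrowE det_mulmx /tperm_mx det_perm normrM normr_sign mul1r. Qed.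

Local Notation "''[' u , v ]" := (@dotmx _ _ u v) : ring_scope.

Unset Implicit Arguments.

(* Rows of U are u_0..u_n in C^(n+1); P j is a unit representative of the vertex P_j. *)
Theorem mainTheorem10 (C : numClosedFieldType) (n : nat) (hn : (0 < n)%N)
  (U : 'M[C]_(n.+1))
  (hunit : forall i : 'I_n.+1, vnorm (row i U) = 1)
  (hind : row_free U)
  (P : 'I_n.+1 -> 'rV[C]_(n.+1))
  (hP : forall j : 'I_n.+1, vnorm (P j) = 1 /\
          (forall i : 'I_n.+1, i != j -> dotv (row i U) (P j) = 0))
  (d : 'I_n.+1 -> C)
  (hd : forall j : 'I_n.+1, is_dist_pt_hyp (P j) (row j U) (d j))
  (dmin : C)
  (hdmin : (exists j : 'I_n.+1, dmin = d j) /\ (forall j : 'I_n.+1, dmin <= d j)) :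
  dmin ^+ n <= `|\det U| <= dmin.
Proof.
have hU : forall i, '[row i U, row i U] = 1 := fun i => vnorm1 (hunit i).
have dU : \det U != 0.
  by move: hind; rewrite row_free_unit unitmxE unitfE.
have hP1 : forall j, '[P j, P j] = 1 := fun j => vnorm1 (hP j).1.
pose X := fun j => conjv (P j).
have hX1 : forall j, '[X j, X j] = 1 by move=> j; rewrite dot_conjv hP1.
have hXo : forall i j, j != i -> '[row j U, X i] = 0.
  by move=> i j ji; rewrite -dotvE (hP i).2.
have dotX : forall i, '[row i U, X i] = dotv (row i U) (P i).
  by move=> i; rewrite -dotvE.
have dge0 : forall j, 0 <= d j.
  by move=> j; have [[x0 [_ _ <-]] _] := hd j; apply: wedge_ge0.
have dle : forall j, d j <= `|dotv (row j U) (P j)|.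
  by move=> j; apply: dist_ub (hP1 j) (hU j) (hd j).
have dge : forall j, `|dotv (row j U) (P j)| <= d j.
  move=> j; have [[x0 [hux0 hx0 <-]] _] := hd j.
  exact: dist_lb (hP1 j) (hU j) (vnorm1 hx0) hux0.
case: hdmin => [[j0 ->] hmin].
apply/andP; split.
  apply: le_trans (det_lb hU dU hX1 hXo).
  have -> : d j0 ^+ n = \prod_(i < n) d j0 by rewrite prodr_const card_ord.
  apply: ler_prod => i _; rewrite dge0 /= dotX.
  exact: le_trans (hmin _) (dle _).
apply: le_trans (dge j0).
pose U' := xrow j0 ord_max U.
have hU' : forall i, '[row i U', row i U'] = 1 by move=> i; rewrite row_xrow hU.
have dU' : \det U' != 0 by rewrite -normr_eq0 normdet_xrow normr_eq0.
have hXo' : forall j, j != ord_max -> '[row j U', X j0] = 0.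
  move=> j jn; rewrite row_xrow hXo //.
  by rewrite -{2}(tpermR j0 (@ord_max n)) (inj_eq perm_inj).
have := det_ub hU' dU' (hX1 j0) hXo'.
by rewrite normdet_xrow row_xrow tpermR dotX.
Qed.
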